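(* Let $G$ be a finite nilpotent group and $N\lhd G$, $\Gamma=G/N$. Then the following are equivalent: (i) $1\to N\to G\to\Gamma\to1$ splits; (ii) $1\to N_p\to G_p\to\Gamma_p\to1$ splits for all primes $p$; (iii) $\mathcal{K}_r^S(G/N)=1$ in $\Omega(G)$.
   Context: For a prime $p$ and Sylow $p$-subgroup $G_p$ of $G$, $N_p=N\cap G_p$ and $\Gamma_p=(G_pN)/N$. $\Omega(G)$ is the Burnside ring of $G$ (Grothendieck ring of finite $G$-sets under disjoint union and Cartesian product), with dimension homomorphism $\alpha(X)=|X|$ and regular element $r=G/\{e\}$. $S=\{G/H_1,\dots,G/H_n\}$ where $H_1,\dots,H_n$ is a full set of representatives of the conjugacy classes of subgroups of $G$. For $x\in\Omega(G)$, $S(x)=\{s\in S: s\cdot x\in\mathbb{Z}r\}$, $\mathrm{Ind}(x)=\{m\in\mathbb{Z}: s\cdot x=m r \text{ for some } s\in S(x)\}$, and $\mathcal{K}_r^S(x)=\gcd(\mathrm{Ind}(x))$ (with $\mathcal{K}_r^S(x)=\infty$ if $S(x)=\emptyset$). *)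

(* Defs.v *)
From HB Require Import structures.
From mathcomp Require Import all_boot all_order all_algebra all_fingroup all_solvable.
Set Implicit Arguments. Unset Strict Implicit. Unset Printing Implicit Defensive.
Import GroupScope.

Record gset (gT : finGroupType) (G : {set gT}) := GSet {
  gs_T : finType;
  gs_A : {set gs_T};
  gs_act : gs_T -> gT -> gs_T;
  gs_stable : forall x g, x \in gs_A -> g \in G -> gs_act x g \in gs_A;
  gs_id : forall x, x \in gs_A -> gs_act x 1 = x;
  gs_mul : forall x g h, x \in gs_A -> g \in G -> h \in G ->
             gs_act x (g * h) = gs_act (gs_act x g) h }.

Section GSets.
Variables (gT : finGroupType) (G : {group gT}).

Definition gset_iso (X Y : gset G) : Prop :=
  exists f : gs_T X -> gs_T Y,
    [/\ {in gs_A X &, injective f}, f @: gs_A X = gs_A Y &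
        forall x g, x \in gs_A X -> g \in G -> f (gs_act x g) = gs_act (f x) g].

Definition coset_gset (H : {group gT}) : gset G.
Proof.
refine (@GSet gT G {set gT}%type (rcosets H G) (fun C g => C :* g) _ _ _).
- move=> C g /rcosetsP [x xG ->] gG; rewrite -rcosetM; apply/rcosetsP.
  by exists (x * g) => //; rewrite groupM.
- by move=> C _; rewrite rcoset1.
- by move=> C g h _ _ _; rewrite rcosetM.
Defined.

Definition empty_gset : gset G.
Proof.
refine (@GSet gT G void set0 (fun x _ => x) _ _ _); by [].
Defined.

Definition sum_gset (X Y : gset G) : gset G.
Proof.
refine (@GSet gT G (gs_T X + gs_T Y)%type
  [set z | match z with inl x => x \in gs_A X | inr y => y \in gs_A Y end]
  (fun z g => match z with inl x => inl (gs_act x g) | inr y => inr (gs_act y g) end)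
  _ _ _).
- by move=> [x|y] g; rewrite !inE => ? ?; apply: gs_stable.
- by move=> [x|y]; rewrite inE => ?; rewrite gs_id.
- by move=> [x|y] g h; rewrite inE => ? ? ?; rewrite gs_mul.
Defined.

Definition prod_gset (X Y : gset G) : gset G.
Proof.
refine (@GSet gT G (gs_T X * gs_T Y)%type (setX (gs_A X) (gs_A Y))
  (fun z g => (gs_act z.1 g, gs_act z.2 g)) _ _ _).
- by move=> [x y] g /setXP [? ?] ?; apply/setXP; split; apply: gs_stable.
- by move=> [x y] /setXP [? ?] /=; rewrite !gs_id.
- by move=> [x y] g h /setXP [? ?] ? ? /=; rewrite !gs_mul.
Defined.

Fixpoint nat_gset (n : nat) (X : gset G) : gset G :=
  if n is n'.+1 then sum_gset X (nat_gset n' X) else empty_gset.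

(* Equality of the classes [X] and [Y] in the Burnside ring Omega(G),
   i.e. in the Grothendieck group of finite G-sets under disjoint union. *)
Definition omega_eq (X Y : gset G) : Prop :=
  exists Z : gset G, gset_iso (sum_gset X Z) (sum_gset Y Z).

Definition reg_gset : gset G := coset_gset 1%G.

(* [X] = m r in Omega(G) for the integer m = a - b *)
Definition omega_eq_int (X : gset G) (m : int) : Prop :=
  exists a b : nat, m = (a%:Z - b%:Z)%R /\
    omega_eq (sum_gset X (nat_gset b reg_gset)) (nat_gset a reg_gset).

Definition subgroup_class_reps (S : {set {group gT}}) : Prop :=
  [/\ forall H, H \in S -> H \subset G,
      forall K : {group gT}, K \subset G ->
        exists2 H, H \in S & exists2 g, g \in G & (K :=: H :^ g) &
      forall H1 H2, H1 \in S -> H2 \in S ->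
        (exists2 g, g \in G & (H1 :^ g :=: H2)) -> H1 = H2].

(* Ind(x) for x = [X] (product s.x being the Cartesian product) *)
Definition Ind (S : {set {group gT}}) (X : gset G) (m : int) : Prop :=
  exists2 H, H \in S & omega_eq_int (prod_gset (coset_gset H) X) m.

Definition is_gcd_set (P : int -> Prop) (d : nat) : Prop :=
  (forall m, P m -> (d%:Z %| m)%Z) /\
  (forall e : int, (forall m, P m -> (e %| m)%Z) -> (e %| d%:Z)%Z).

(* K_r^S(x) = k, with None standing for infinity (S(x) empty) *)
Definition KrS_eq (S : {set {group gT}}) (X : gset G) (k : option nat) : Prop :=
  match k with
  | None => ~ (exists m, Ind S X m)
  | Some d => (exists m, Ind S X m) /\ is_gcd_set (Ind S X) d
  end.

End GSets.

Definition ext_splits (gT : finGroupType) (N E : {set gT}) (Q : {set coset_of N}) :=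
  exists s : {morphism Q >-> gT},
    s @* Q \subset E /\ {in Q, forall y, coset N (s y) = y}.
Arguments ext_splits {gT} N E Q.

(* Main.v *)
Require Import Defs.
From HB Require Import structures.
From mathcomp Require Import all_boot all_order all_algebra all_fingroup all_solvable.
From mathcomp Require Import zify ring.
From Stdlib Require Import Classical.
Open Scope group_scope.


Section Grp.
Set Implicit Arguments. Unset Strict Implicit.
Import GroupScope.
Variable gT : finGroupType.
Implicit Types G N H K P E : {group gT}.

Lemma compl_split N K E : K \subset 'N(N) -> K :&: N = 1 -> K \subset E ->
  ext_splits N E (K / N).
Proof.
move=> nNK tiKN sKE.
have tiNK : N :&: K = 1 by rewrite setIC.
have iso := quotient_isom nNK tiNK.
have injf := isom_inj iso; have imf := isom_im iso.
have sQ : K / N \subset restrm nNK (coset N) @* K by rewrite imf.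
exists (restrm sQ (invm injf)); split.
  by rewrite restrmEsub // -imf im_invm.
move=> y Qy /=.
have Qy' : y \in restrm nNK (coset N) @* K by rewrite imf.
have := invmK injf Qy'.
have Ki : invm injf y \in K.
  have h := im_invm injf.
  have := mem_morphim (invm_morphism injf) Qy' Qy'.
  by rewrite h.
exact.
Qed.

Lemma nil_sylow_normal G P p : nilpotent G -> p.-Sylow(G) P -> P :=: 'O_p(G).
Proof.
move=> nilG sylP; have hallO := nilpotent_pcore_Hall p nilG.
apply/eqP; rewrite eqEcard (sub_normal_Hall hallO (pcore_normal _ _) (pHall_sub sylP)).
by rewrite (pHall_pgroup sylP) (card_Hall sylP) (card_Hall hallO) /=.
Qed.

Lemma core_split G N H P p m : nilpotent G -> N <| G -> H \subset G ->
  H :&: N = 1 -> (m * (#|H| * #|N|))%N = #|G| -> ~~ (p %| m) -> prime p ->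
  p.-Sylow(G) P -> ext_splits N P (P * N / N).
Proof.
move=> nilG nsNG sHG tiHN eG pm pr sylP.
have nsPG : P <| G by rewrite (nil_sylow_normal nilG sylP) pcore_normal.
have sNG := normal_sub nsNG.
have hallK := setI_normal_Hall nsPG sylP sHG.
have hallNp := setI_normal_Hall nsPG sylP sNG.
have tiKN : (P :&: H) :&: (P :&: N) = 1.
  apply/trivgP; rewrite -tiHN; apply: setISS; exact: subsetIr.
have m0 : 0 < m.
  by rewrite lt0n; apply/eqP => m0; move: (cardG_gt0 G); rewrite -eG m0.
have eP : #|P| = (#|P :&: H| * #|P :&: N|)%N.
  rewrite (card_Hall sylP) (card_Hall hallK) (card_Hall hallNp) -eG.
  rewrite !partnM ?muln_gt0 ?cardG_gt0 //.
  have /eqP -> : (m`_p == 1)%N by rewrite partn_eq1 // p'natE.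
  by rewrite mul1n.
have eKN : (P :&: H) * (P :&: N) = P.
  apply/eqP; rewrite eqEcard mul_subG ?subsetIl //= TI_cardMg // eP leqnn.
  by [].
have -> : P * N = (P :&: H) * N by rewrite -{1}eKN -mulgA mulSGid ?subsetIr.
rewrite quotientMidr; apply: compl_split.
- exact: subset_trans (subsetIr _ _) (subset_trans sHG (normal_norm nsNG)).
- by apply/trivgP; rewrite -tiHN setSI ?subsetIr.
- exact: subsetIl.
Qed.

Lemma split_compl N E : E \subset 'N(N) -> ext_splits N E (E / N) ->
  exists K : {group gT}, [/\ K \subset E, K :&: N = 1 & E \subset K * N].
Proof.
move=> nNE [s [sKE cs]]; exists (s @* (E / N))%G; split => //.
  apply/trivgP/subsetP => x /setIP [/morphimP [y _ Qy ->] Nx].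
  have : coset N (s y) = 1 by rewrite coset_id.
  by rewrite cs // => ->; rewrite morph1 inE.
apply/subsetP => x Ex.
have Qy : coset N x \in E / N by rewrite mem_quotient.
have Kz : s (coset N x) \in s @* (E / N) by rewrite mem_morphim.
have nz : s (coset N x) \in 'N(N) by apply: (subsetP nNE); apply: (subsetP sKE).
have : coset N x = coset N (s (coset N x)) by rewrite cs.
move/(rcoset_kercosetP (subsetP nNE x Ex) nz); rewrite mem_rcoset => Nxz.
have nNK : s @* (E / N) \subset 'N(N) := subset_trans sKE nNE.
rewrite (normC nNK) -(mulgKV (s (coset N x)) x); exact: mem_mulg.
Qed.

Definition pik (k : nat) : nat_pred := [pred q : nat | q < k].

Lemma dvd_prod_sub N (A B : {group gT}) : A \subset 'N(N) -> B \subset 'N(N) -> A \subset B ->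
  (#|(A * N)%g| %| #|(B * N)%g|)%N.
Proof.
move=> nA nB sAB; rewrite -(norm_joinEl nA) -(norm_joinEl nB).
apply: cardSg.
by rewrite /= (norm_joinEl nA) (norm_joinEl nB) mulSg.
Qed.

Lemma ii_i G N : nilpotent G -> N <| G ->
  (forall p P, prime p -> p.-Sylow(G) P -> ext_splits N P (P * N / N)) ->
  ext_splits N G (G / N).
Proof.
move=> nilG nsNG hyp; have nNG := normal_norm nsNG; have sNG := normal_sub nsNG.
have claim : forall k, exists K : {group gT}, [/\ K \subset G, K :&: N = 1,
    (pik k).-group K & forall q, prime q -> q < k -> (#|G|`_q %| #|(K * N)%g|)%N].
  elim=> [|k [K [sKG tiKN piK dK]]].
    exists 1%G; split => //; [exact: sub1G | exact: setI1g | exact: pgroup1].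
  have nNK := subset_trans sKG nNG.
  case: (boolP (prime k)) => pk; last first.
    exists K; split => //.
      by apply: sub_pgroup piK => q; rewrite !inE => /ltnW.
    move=> q pq; rewrite ltnS leq_eqVlt => /orP [/eqP qk|]; last exact: dK.
    by move: pk; rewrite -qk pq.
  set P := 'O_k(G).
  have sylP : k.-Sylow(G) P := nilpotent_pcore_Hall k nilG.
  have sPG : P \subset G := pcore_sub _ _.
  have nNP := subset_trans sPG nNG.
  have := hyp k P pk sylP; rewrite quotientMidr => /(split_compl nNP).
  case=> Kp [sKpP tiKpN sPKpN].
  have nNKp := subset_trans sKpP nNP.
  have [_ _ cOO _] := dprodP (nilpotent_pcoreC k nilG).
  have sKO : K \subset 'O_k^'(G).
    rewrite (sub_normal_Hall (nilpotent_pcore_Hall k^' nilG) (pcore_normal _ _) sKG).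
    apply: sub_pgroup piK => q; rewrite !inE /= => qk.
    by rewrite ltn_eqF.
  have cKKp : K \subset 'C(Kp).
    by apply: centSS sKO sKpP _.
  have eK' := cent_joinEl cKKp.
  have kKp : k.-group Kp := pgroupS sKpP (pcore_pgroup _ _).
  exists (K <*> Kp)%G; split.
  - by rewrite join_subG sKG (subset_trans sKpP sPG).
  - apply/trivgP/subsetP => x; rewrite inE /= eK'.
    case/andP=> /mulsgP [a b Ka Kpb ->] Nab.
    have cab : commute a b by apply: (centP (subsetP cKKp a Ka)).
    have pia : (pik k).-elt a := mem_p_elt piK Ka.
    have kb : k.-elt b := mem_p_elt kKp Kpb.
    have b1 : b.`_(pik k) = 1.
      apply/constt1P; apply: sub_p_elt kb => q; rewrite !inE /= => /eqP ->.
      by rewrite ltnn.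
    have eab : (a * b).`_(pik k) = a by rewrite consttM // b1 mulg1 constt_p_elt.
    have Na : a \in N.
      rewrite -eab; apply: (subsetP _ _ (cycle_constt _ _)).
      by rewrite cycle_subG.
    have a1 : a = 1.
      have : a \in K :&: N by rewrite inE Ka Na.
      by rewrite tiKN => /set1P.
    move: Nab; rewrite a1 mul1g => Nb.
    by rewrite -tiKpN inE Kpb Nb.
  - rewrite /= eK' pgroupM; apply/andP; split.
      by apply: sub_pgroup piK => q; rewrite !inE => /ltnW.
    by apply: sub_pgroup kKp => q; rewrite !inE => /eqP ->.
  - have nNK' : K <*> Kp \subset 'N(N) by rewrite join_subG nNK.
    move=> q pq; rewrite ltnS leq_eqVlt => /orP [/eqP qk|qk].
      rewrite qk -(card_Hall sylP).
      rewrite -(norm_joinEl nNK'); apply: cardSg.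
      rewrite /= (norm_joinEl nNK'); apply: (subset_trans sPKpN); apply: mulSg.
      exact: joing_subr.
    apply: dvdn_trans (dK q pq qk) (dvd_prod_sub nNK nNK' _).
    exact: joing_subl.
have [K [sKG tiKN _ dK]] := claim #|G|.+1.
have nNK := subset_trans sKG nNG.
have eG : K <*> N = G.
  apply/eqP; rewrite eqEcard join_subG sKG sNG /=.
  apply: dvdn_leq; first exact: cardG_gt0.
  rewrite (norm_joinEl nNK); apply/dvdn_partP; first exact: cardG_gt0.
  move=> q; rewrite mem_primes => /and3P [pq G0 qG].
  by apply: dK => //; rewrite ltnS dvdn_leq.
have eQ : G / N = K / N by rewrite -eG (norm_joinEl nNK) quotientMidr.
by rewrite eQ; apply: compl_split.
Qed.
End Grp.


Section CS.
Lemma card_sumset (T1 T2 : finType) (A : {set (T1 + T2)%type}) :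
  #|A| = (#|[set x | inl x \in A]| + #|[set y | inr y \in A]|)%N.
Proof.
have eA : A = inl @: [set x | inl x \in A] :|: inr @: [set y | inr y \in A].
  apply/setP => [[x|y]]; rewrite !inE.
    have -> : (inl x \in inr @: [set y | inr y \in A]) = false.
      by apply/imsetP => -[? _].
    by rewrite mem_imset ?orbF ?inE //; move=> ? ? [].
  have -> : (inr y \in inl @: [set y | inl y \in A]) = false.
    by apply/imsetP => -[? _].
  by rewrite mem_imset ?inE //; move=> ? ? [].
rewrite {1}eA cardsU !card_imset; try by move=> ? ? [].
have -> : inl @: [set x | inl x \in A] :&: inr @: [set y | inr y \in A] = set0.
  by apply/setP => z; rewrite !inE; apply/andP => -[/imsetP [? _ ->] /imsetP [? _]].
by rewrite cards0 subn0.
Qed.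

End CS.
Section GS.
Set Implicit Arguments. Unset Strict Implicit.
Import GroupScope.
Variables (gT : finGroupType) (G : {group gT}).

Definition fixc (X : gset G) (g : gT) := #|[set x in gs_A X | gs_act x g == x]|.

Lemma fixc_iso X Y g : gset_iso X Y -> g \in G -> fixc X g = fixc Y g.
Proof.
case=> f [inj im eqf] Gg; rewrite /fixc.
have -> : [set y in gs_A Y | gs_act y g == y] =
          f @: [set x in gs_A X | gs_act x g == x].
  apply/setP => y; apply/idP/idP.
  - rewrite inE => /andP [Ay fy].
    have : y \in f @: gs_A X by rewrite im.
    case/imsetP => x Ax ey; apply/imsetP; exists x => //.
    rewrite inE Ax /=; apply/eqP; apply: inj => //; first exact: gs_stable.
    by rewrite eqf // -ey; apply/eqP.
  - case/imsetP => x; rewrite inE => /andP [Ax /eqP fx] ->.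
    rewrite inE -eqf // fx eqxx andbT -im; exact: imset_f.
rewrite card_in_imset // => x y; rewrite !inE => /andP [Ax _] /andP [Ay _].
exact: inj.
Qed.

Lemma fixc_sum X Y g : fixc (sum_gset X Y) g = (fixc X g + fixc Y g)%N.
Proof.
rewrite /fixc (@card_sumset (gs_T X) (gs_T Y)); congr (_ + _)%N; apply: eq_card => x; rewrite !inE /=;
  by congr (_ && _); apply/eqP/eqP => [[]|->].
Qed.

Lemma fixc_empty g : fixc (empty_gset G) g = 0%N.
Proof. by apply/eqP; rewrite cards_eq0; apply/eqP/setP => -[]. Qed.

Lemma fixc1 X : fixc X 1 = #|gs_A X|.
Proof. rewrite /fixc; apply: eq_card => x; rewrite !inE.
by case Ax: (x \in gs_A X) => //=; rewrite (gs_id Ax) eqxx.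
Qed.

Lemma fixc_reg g : g \in G -> g != 1 -> fixc (reg_gset G) g = 0%N.
Proof.
move=> Gg g1; apply/eqP; rewrite cards_eq0; apply/eqP/setP => C; rewrite !inE /=.
apply/andP => -[/rcosetsP [x Gx ->] /eqP e].
have : x \in (1 :* x) :* g by rewrite e rcoset_refl.
rewrite !mem_rcoset inE => /eqP h.
have : g^-1 = 1.
  apply: (mulgI x); rewrite mulg1; apply: (mulIg x^-1); by rewrite mulgV.
by move/eqP; rewrite invg_eq1 (negbTE g1).
Qed.


Lemma fixc_natreg n g : g \in G -> g != 1 -> fixc (nat_gset n (reg_gset G)) g = 0%N.
Proof.
move=> Gg g1; elim: n => [|n IH] /=; first exact: fixc_empty.
by rewrite fixc_sum IH fixc_reg.
Qed.

Lemma card_natreg n : fixc (nat_gset n (reg_gset G)) 1 = (n * #|G|)%N.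
Proof.
elim: n => [|n IH] /=; first exact: fixc_empty.
by rewrite fixc_sum IH fixc1 mulSn /= -[#|rcosets _ _|]/(#|G : 1|) indexg1.
Qed.

Lemma card_prod (H N : {group gT}) :
  fixc (prod_gset (coset_gset G H) (coset_gset G N)) 1 = (#|G : H| * #|G : N|)%N.
Proof. by rewrite fixc1 /= cardsX. Qed.

Lemma fix_prod_pos (H N : {group gT}) g : g \in H -> g \in N ->
  (0 < fixc (prod_gset (coset_gset G H) (coset_gset G N)) g)%N.
Proof.
move=> Hg Ng; apply/card_gt0P; exists ((H : {set gT}), (N : {set gT})).
rewrite !inE /=; apply/andP; split.
  by apply/andP; split; apply/rcosetsP; exists 1; rewrite ?group1 ?rcoset1.
by rewrite !rcoset_id.
Qed.

Lemma ind_facts (N H : {group gT}) a b (Z : gset G) : H \subset G -> N \subset G ->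
  gset_iso (sum_gset (sum_gset (prod_gset (coset_gset G H) (coset_gset G N))
                               (nat_gset b (reg_gset G))) Z)
           (sum_gset (nat_gset a (reg_gset G)) Z) ->
  [/\ H :&: N = 1, (b <= a)%N & ((a - b) * (#|H| * #|N|))%N = #|G|].
Proof.
move=> sHG sNG iso.
have key g : g \in G ->
    (fixc (prod_gset (coset_gset G H) (coset_gset G N)) g + fixc (nat_gset b (reg_gset G)) g = fixc (nat_gset a (reg_gset G)) g)%N.
  move=> Gg; move: (fixc_iso iso Gg); rewrite !fixc_sum => e; lia.
have tiHN : H :&: N = 1.
  apply/trivgP/subsetP => g /setIP [Hg Ng]; apply/set1P; apply/eqP.
  apply/negPn/negP => g1.
  have Gg : g \in G := subsetP sHG g Hg.
  move: (key g Gg) (fix_prod_pos Hg Ng); rewrite !fixc_natreg // addn0 => ->.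
  by [].
move: (key 1 (group1 _)); rewrite card_prod !card_natreg => e.
have G0 := cardG_gt0 G.
have ba : (b <= a)%N by rewrite -(leq_pmul2r G0) -e leq_addl.
split => //.
have e2 : ((a - b) * #|G|)%N = (#|G : H| * #|G : N|)%N by rewrite mulnBl -e addnK.
have LH := Lagrange sHG; have LN := Lagrange sNG.
apply/eqP; rewrite -(eqn_pmul2r G0); apply/eqP.
rewrite mulnAC e2 -{1}LH -LN; ring.
Qed.

Lemma rcosetI (A B : {set gT}) x : (A :* x) :&: (B :* x) = (A :&: B) :* x.
Proof. by apply/setP => y; rewrite !(inE, mem_rcoset). Qed.

Lemma pair_rep (H N : {group gT}) C D : H * N = G ->
  C \in rcosets H G -> D \in rcosets N G ->
  exists2 x, x \in G & C = H :* x /\ D = N :* x.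
Proof.
move=> eHN /rcosetsP [y Gy ->] /rcosetsP [z Gz ->].
have : y * z^-1 \in H * N by rewrite eHN groupM ?groupV.
case/mulsgP => h n Hh Nn e.
have Gh : h \in G by rewrite -eHN -[h]mulg1 mem_mulg.
exists (h^-1 * y); first by rewrite groupM ?groupV.
split.
  by rewrite rcosetM (rcoset_id (groupVr Hh)).
have -> : h^-1 * y = n * z by rewrite -(mulgKV z y) e -!mulgA mulKg.
by rewrite rcosetM (rcoset_id Nn).
Qed.

Lemma compl_iso (H N : {group gT}) : H \subset G -> N \subset G ->
  H :&: N = 1 -> H * N = G ->
  omega_eq_int (prod_gset (coset_gset G H) (coset_gset G N)) 1.
Proof.
move=> sHG sNG tiHN eHN.
exists 1%N, 0%N; split; first by [].
exists (empty_gset G).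
pose f (z : gs_T (sum_gset (sum_gset (prod_gset (coset_gset G H) (coset_gset G N))
               (nat_gset 0 (reg_gset G))) (empty_gset G))) :
     gs_T (sum_gset (nat_gset 1 (reg_gset G)) (empty_gset G)) :=
  match z with
  | inl (inl (C, D)) => inl (inl (C :&: D))
  | inl (inr v) => match v with end
  | inr v => match v with end
  end.
exists f; split.
- move=> [[[C D]|[]]|[]] [[[C' D']|[]]|[]] //; rewrite !inE /=.
  move=> /andP [hC dD] /andP [hC' dD'] [e].
  have [x Gx [eC eD]] := pair_rep eHN hC dD.
  have [x' Gx' [eC' eD']] := pair_rep eHN hC' dD'.
  move: e; rewrite eC eD eC' eD' !rcosetI tiHN => e.
  have : x \in 1 :* x' by rewrite -e rcoset_refl.
  rewrite mem_rcoset inE => /eqP h.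
  have xx : x = x' by rewrite -(mulgKV x' x) h mul1g.
  by rewrite xx.
- apply/setP => w; apply/idP/idP.
  + case/imsetP => -[[[C D]|[]]|[]]; rewrite !inE /= => /andP [hC dD] ->.
    have [x Gx [eC eD]] := pair_rep eHN hC dD.
    rewrite !inE /= eC eD rcosetI tiHN; apply/rcosetsP; exists x => //.
  + case: w => [[C|[]]|[]]; rewrite !inE /= => /rcosetsP [x Gx ->].
    apply/imsetP; exists (inl (inl (H :* x, N :* x))).
      by rewrite !inE /=; apply/andP; split; apply/rcosetsP; exists x.
    by rewrite /= rcosetI tiHN.
- by move=> [[[C D]|[]]|[]] g //= _ _; rewrite rcosetI.
Qed.
End GS.

Theorem lemma3p5 (gT : finGroupType) (G N : {group gT})
    (S : {set {group gT}}) :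
  nilpotent G -> N <| G -> subgroup_class_reps G S ->
  [/\ (ext_splits N G (G / N)%g <->
       (forall (p : nat) (P : {group gT}), prime p -> p.-Sylow(G) P ->
          ext_splits N P ((P * N) / N)%g)),
      ((forall (p : nat) (P : {group gT}), prime p -> p.-Sylow(G) P ->
          ext_splits N P ((P * N) / N)%g) <->
       KrS_eq S (coset_gset G N) (Some 1%N)) &
      (KrS_eq S (coset_gset G N) (Some 1%N) <-> ext_splits N G (G / N)%g)].
Proof.
move=> nilG nsNG reps.
have sNG := normal_sub nsNG; have nNG := normal_norm nsNG.
have [sS allS _] := reps.
have i_ii : ext_splits N G (G / N)%g ->
    (forall (p : nat) (P : {group gT}), prime p -> p.-Sylow(G) P ->
          ext_splits N P ((P * N) / N)%g).
  case/(split_compl nNG) => K [sKG tiKN sGKN] p P pp sylP.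
  have eKN : (K * N)%g = G.
    by apply/eqP; rewrite eqEsubset mul_subG.
  apply: (core_split (m := 1%N) nilG nsNG sKG tiKN _ _ pp sylP).
    by rewrite mul1n -TI_cardMg // eKN.
  by rewrite dvdn1; apply/eqP => p1; move: pp; rewrite p1.
have i_iii : ext_splits N G (G / N)%g -> KrS_eq S (coset_gset G N) (Some 1%N).
  case/(split_compl nNG) => K [sKG tiKN sGKN].
  have eKN : (K * N)%g = G.
    by apply/eqP; rewrite eqEsubset mul_subG.
  have [H HS [g Gg eK]] := allS K sKG.
  have eH : H :=: K :^ g^-1 by rewrite eK conjsgK.
  have nNg : N :^ g^-1 = N := (normsP nNG) _ (groupVr Gg).
  have tiHN : H :&: N = 1 by rewrite eH -nNg -conjIg tiKN conjs1g.
  have eHN : (H * N)%g = G by rewrite eH -nNg -conjsMg eKN conjGid ?groupV.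
  have Ind1 : Ind S (coset_gset G N) (Posz 1).
    by exists H => //; apply: compl_iso => //; exact: sS.
  split; first by exists (Posz 1).
  split => [m _|e he]; first exact: dvd1z.
  exact: he _ Ind1.
have iii_ii : KrS_eq S (coset_gset G N) (Some 1%N) ->
    (forall (p : nat) (P : {group gT}), prime p -> p.-Sylow(G) P ->
          ext_splits N P ((P * N) / N)%g).
  move=> [_ [_ hg]] p P pp sylP.
  case: (classic (exists m, Ind S (coset_gset G N) m /\ ~~ ((Posz p) %| m)%Z)).
    move=> [m [[H HS [a [b [em [Z iso]]]]] pm]].
    have [tiHN ba eG] := ind_facts (sS H HS) sNG iso.
    move: pm; rewrite em subzn // dvdzE /= => pm.
    exact: (core_split nilG nsNG (sS H HS) tiHN eG pm pp sylP).
  move=> no; exfalso.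
  have : ((Posz p) %| 1)%Z.
    apply: hg => m Im; apply/negPn/negP => h; apply: no; by exists m; split.
  rewrite dvdzE /= dvdn1 => /eqP p1; move: pp; rewrite p1.
  by [].
have ii_i' := ii_i nilG nsNG.
split; split => //.
- by move=> h; apply: i_iii; apply: ii_i'.
- by move=> h; apply: ii_i'; apply: iii_ii.
Qed.
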